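(* Let $k$ be a field of characteristic $\neq 2$ containing $\sqrt{-1}$, and let $b,\beta$ be independent indeterminates. The affine conic over $k(b,\beta)$ in the variables $a,\alpha$ given by $$a^2\beta(1-\beta^2)=\alpha^2b(1-b^2)+b\beta(b^2-\beta^2)$$ has no $k(b,\beta)$-rational point.
   Context: This conic is the generic fibre of the projection $(a,b,\alpha,\beta)\mapsto(b,\beta)$ restricted to the hypersurface $H$ birational to the Ueno–Campana threefold. *)

(* Defs.v *)
From HB Require Import structures.
From mathcomp Require Import all_boot all_order all_algebra.
From mathcomp Require Import fraction.
Set Implicit Arguments. Unset Strict Implicit. Unset Printing Implicit Defensive.
Import GRing.Theory.
Local Open Scope ring_scope.

Definition Kb (k : fieldType) : fieldType := {fraction {poly k}}.
(* k(b,beta) = k(b)(beta) : rational function field in two independent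
   indeterminates b, beta over k *)
Definition Kbbeta (k : fieldType) : fieldType := {fraction {poly Kb k}}.

Definition ind_b (k : fieldType) : Kbbeta k :=
  FracField.tofrac ((FracField.tofrac ('X : {poly k}) : Kb k)%:P : {poly Kb k}).
Definition ind_beta (k : fieldType) : Kbbeta k :=
  FracField.tofrac ('X : {poly Kb k}).

(* Main.v *)
Require Import Defs.
From HB Require Import structures.
From mathcomp Require Import all_boot all_order all_algebra.
From mathcomp Require Import fraction.
From mathcomp Require Import generic_quotient ring zify.
Import GRing.Theory.
Local Open Scope ring_scope.

Section Aux.
Local Open Scope quotient_scope.
Lemma fracP (R : idomainType) (x : {fraction R}) :
  exists n d : R, d != 0 /\ x = (FracField.tofrac n) / (FracField.tofrac d).
Proof.
elim/quotW: x => r.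
exists (\n_r), (\d_r); split; first exact: denom_ratioP.
have dF : FracField.tofrac (\d_r) != 0 by rewrite tofrac_eq0 denom_ratioP.
apply: (mulIf dF); rewrite divfK //.
unlock FracField.tofrac.
rewrite -[_ * _]FracField.pi_mul.
apply/eqmodP => /=.
rewrite FracField.equivfE /FracField.mulf !numden_Ratio ?oner_neq0 ?mulf_neq0 ?denom_ratioP ?oner_neq0 //.
by rewrite !mulr1 mulrC.
Qed.
End Aux.

Lemma root0_factor (L : fieldType) (p : {poly L}) : p.[0] = 0 -> exists q, p = q * 'X.
Proof.
move=> h; have /factor_theorem [q ->] : root p 0 by apply/eqP.
by exists q; rewrite subr0.
Qed.

Lemma desc (L : fieldType) (c e : L) (F D : {poly L}) (hc : c != 0)
  (hF : F.[0] = 1) (hD : D.[0] = e) (hns : forall u : L, u^+2 != e) :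
  forall n (P R Q : {poly L}), (size Q <= n)%N -> Q != 0 ->
  P^+2 * 'X * F != c%:P * R^+2 + 'X * D * Q^+2.
Proof.
elim => [|n IH] P R Q hs hQ.
  by rewrite size_poly_leq0 (negPf hQ) in hs.
apply/eqP => E.
have E0 := congr1 (horner^~ 0) E; rewrite /= !(hornerD, hornerM, horner_exp, hornerX, hornerC) hF hD in E0.
have H : c * R.[0]^+2 = 0.
  by rewrite !(mulr0, mul0r, addr0, add0r) in E0; rewrite expr2 -E0.
move/eqP: H; rewrite mulf_eq0 (negPf hc) /= expf_eq0 /= => /eqP /root0_factor [R1 hR1].
subst R.
have XnZ : ('X : {poly L}) != 0 by rewrite polyX_eq0.
have E1 : P^+2 * F = c%:P * R1^+2 * 'X + D * Q^+2.
  apply: (mulfI XnZ); rewrite mulrA (mulrC 'X) E; ring.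
have E2 := congr1 (horner^~ 0) E1; rewrite /= !(hornerD, hornerM, horner_exp, hornerX, hornerC) hF hD mulr1 mulr0 add0r in E2.
rewrite -!expr2 in E2.
have [Q0|Q0] := eqVneq Q.[0] 0.
  move: E2; rewrite Q0 expr0n /= mulr0 => /eqP; rewrite expf_eq0 /= => /eqP.
  move=> /root0_factor [P1 hP1]; subst P.
  have [Q1 hQ1] := @root0_factor _ _ Q0; subst Q.
  have hQ1 : Q1 != 0 by apply: contraNneq hQ => ->; rewrite mul0r.
  have hs1 : (size Q1 <= n)%N by move: hs; rewrite size_mulX.
  move/eqP: (IH P1 R1 Q1 hs1 hQ1); apply.
  apply: (mulfI XnZ).
  transitivity ((P1 * 'X) ^+ 2 * F); first by ring.
  rewrite E1; ring.
move/eqP: (hns (P.[0] / Q.[0])); apply.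
by rewrite expr_div_n E2 mulfK // expf_neq0.
Qed.

Lemma X_nonsquare (k : fieldType) (u : Kb k) :
  u ^+ 2 != FracField.tofrac ('X : {poly k}).
Proof.
apply/eqP => hu.
have [n [d [hd hud]]] := @fracP _ u.
move: hu; rewrite hud; set tn := FracField.tofrac n; set td := FracField.tofrac d.
have tdZ : td != 0 by rewrite tofrac_eq0.
move=> hu.
have : FracField.tofrac (n ^+ 2) = FracField.tofrac ('X * d ^+ 2).
  rewrite !rmorphXn rmorphM /= -/tn -hu.
  have -> : FracField.tofrac (d ^+ 2) = td ^+ 2 by exact: rmorphXn.
  rewrite expr_div_n divfK; last exact: expf_neq0.
  reflexivity.
move/eqP; rewrite tofrac_eq => /eqP E.
clear hu hud tn td tdZ.
have nZ : n != 0.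
  apply/eqP => hn; move: E; rewrite hn expr0n /= => /esym /eqP.
  by rewrite mulf_eq0 polyX_eq0 expf_eq0 /= (negPf hd).
have h1 := size_exp n 2.
have h2 : size ('X * d ^+ 2) = (size (d ^+ 2)).+1 by rewrite mulrC size_mulX // expf_neq0.
have h3 := size_exp d 2.
have h4 : (0 < size (d ^+ 2))%N by rewrite size_poly_gt0 expf_neq0.
rewrite -E in h2.
have h5 : (0 < size (n ^+ 2))%N by rewrite size_poly_gt0 expf_neq0.
rewrite h2 /= -(prednK h4) h3 in h1.
lia.
Qed.

Lemma main_gen (L : fieldType) (b : L) (bZ : b != 0) (ombZ : 1 - b ^+ 2 != 0)
  (hns : forall u : L, u ^+ 2 != b ^+ 3) (a alpha : {fraction {poly L}}) :
  a ^+ 2 * FracField.tofrac 'X * (1 - FracField.tofrac 'X ^+ 2)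
  = alpha ^+ 2 * FracField.tofrac b%:P * (1 - FracField.tofrac b%:P ^+ 2)
    + FracField.tofrac b%:P * FracField.tofrac 'X
      * (FracField.tofrac b%:P ^+ 2 - FracField.tofrac 'X ^+ 2) -> False.
Proof.
move=> E.
pose c := b * (1 - b ^+ 2).
have cZ : c != 0 := mulf_neq0 bZ ombZ.
pose F : {poly L} := 1 - 'X ^+ 2.
pose D : {poly L} := b%:P * (b%:P ^+ 2 - 'X ^+ 2).
have hF : F.[0] = 1 by rewrite /F hornerD hornerN horner_exp hornerX hornerC expr0n /= subr0.
have hD : D.[0] = b ^+ 3.
  rewrite /D hornerM hornerD hornerN !horner_exp hornerX !hornerC expr0n /= subr0.
  by rewrite -exprS.
have [pa [qa [hqa ha]]] := @fracP _ a.
have [pr [qr [hqr hr]]] := @fracP _ alpha.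
pose P := pa * qr; pose R := pr * qa; pose Q := qa * qr.
have hQ : Q != 0 := mulf_neq0 hqa hqr.
move/eqP: (@desc _ c (b ^+ 3) F D cZ hF hD hns (size Q) P R Q (leqnn _) hQ); apply.
apply/eqP; rewrite -tofrac_eq; apply/eqP.
have h1 : FracField.tofrac (1 - 'X ^+ 2 : {poly L}) = 1 - FracField.tofrac ('X : {poly L}) ^+ 2.
  rewrite tofracB tofrac1 tofracXn; reflexivity.
have h3 : FracField.tofrac (b%:P ^+ 2 - 'X ^+ 2 : {poly L}) = FracField.tofrac (b%:P : {poly L}) ^+ 2 - FracField.tofrac ('X : {poly L}) ^+ 2.
  rewrite tofracB !tofracXn; reflexivity.
rewrite /P /R /Q /F /D /c.
rewrite polyCM polyCB polyC1 polyC_exp.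
rewrite tofracD !tofracM h1 h3 tofracB tofrac1 tofracXn.
have tqaZ : FracField.tofrac qa != 0 by rewrite tofrac_eq0.
have tqrZ : FracField.tofrac qr != 0 by rewrite tofrac_eq0.
have hpa : FracField.tofrac pa = a * FracField.tofrac qa.
  rewrite ha (divfK tqaZ); reflexivity.
have hpr : FracField.tofrac pr = alpha * FracField.tofrac qr.
  rewrite hr (divfK tqrZ); reflexivity.
rewrite hpa hpr.
transitivity ((FracField.tofrac qa * FracField.tofrac qr) ^+ 2 *
   (a ^+ 2 * FracField.tofrac ('X : {poly L}) * (1 - FracField.tofrac ('X : {poly L}) ^+ 2))).
  ring.
rewrite E.
ring.
Qed.

Theorem mainTheorem8 (k : fieldType) (hchar : 2%N \notin [pchar k])
  (hi : exists i : k, i ^+ 2 = -1) :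
  ~ exists a alpha : Kbbeta k,
      a ^+ 2 * ind_beta k * (1 - ind_beta k ^+ 2)
      = alpha ^+ 2 * ind_b k * (1 - ind_b k ^+ 2)
        + ind_b k * ind_beta k * (ind_b k ^+ 2 - ind_beta k ^+ 2).
Proof.
move=> [a [alpha E]].
pose b : Kb k := FracField.tofrac ('X : {poly k}).
have bZ : b != 0 by rewrite tofrac_eq0 polyX_eq0.
have ombZ : 1 - b ^+ 2 != 0.
  apply/eqP => h.
  have : FracField.tofrac (1 - 'X ^+ 2 : {poly k}) = 0 by rewrite rmorphB rmorph1 rmorphXn.
  move/eqP; rewrite tofrac_eq0 => /eqP /(congr1 (horner^~ 0)) /=.
  rewrite hornerD hornerN horner_exp hornerX hornerC expr0n /= subr0 => /eqP.
  by rewrite horner0 oner_eq0.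
have hns : forall u : Kb k, u ^+ 2 != b ^+ 3.
  move=> u; apply/eqP => hu; move/eqP: (@X_nonsquare _ (u / b)); apply.
  rewrite expr_div_n hu exprS (mulfK (expf_neq0 _ bZ)); reflexivity.
exact: (@main_gen (Kb k) b bZ ombZ hns a alpha E).
Qed.
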